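(* For every closed type $A$ and every semantic value $v\in[\![A]\!]$ there is a closed term $\emptyset\vdash \mathrm{reify}(v):A$ such that $[\![\mathrm{reify}(v)]\!]=v$.
   Context: Types: $A,B ::= X \mid A\to B \mid A_1\times A_2 \mid 1 \mid A_1+A_2 \mid 0$ ($X$ atomic); a closed type is one containing no atomic types. Terms: $x \mid \lambda x.t \mid t\,u \mid (t_1,t_2) \mid \pi_i t \mid () \mid \sigma_i t \mid \mathtt{match}\ t\ \mathtt{with}\ (\sigma_1 x_1\to u_1 \mid \sigma_2 x_2\to u_2) \mid \mathtt{absurd}(t)$ with standard simple typing; $\mathtt{absurd}(t):A$ for any $A$ when $t:0$. Closed types denote sets: $[\![A\to B]\!]$ = total functions $[\![A]\!]\to[\![B]\!]$, $[\![A\times B]\!]$ = cartesian product, $[\![1]\!]=\{\star\}$, $[\![A+B]\!]=\{(1,a)\mid a\in[\![A]\!]\}\uplus\{(2,b)\mid b\in[\![B]\!]\}$, $[\![0]\!]=\emptyset$. For a closed term $\emptyset\vdash t:A$, $[\![t]\!]\in[\![A]\!]$ is its standard set-theoretic interpretation. *)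

(* Defs.v *)
From Stdlib Require Import List.
Import ListNotations.

Inductive ty : Type :=
| TAtom : nat -> ty
| TArr  : ty -> ty -> ty
| TProd : ty -> ty -> ty
| TUnit : ty
| TSum  : ty -> ty -> ty
| TEmpty : ty.

Fixpoint closed_ty (A : ty) : bool :=
  match A with
  | TAtom _ => false
  | TArr A B | TProd A B | TSum A B => closed_ty A && closed_ty B
  | TUnit | TEmpty => true
  end.

Definition ctx := list ty.

Inductive var : ctx -> ty -> Type :=
| vz : forall G A, var (A :: G) A
| vs : forall G A B, var G A -> var (B :: G) A.

Inductive tm : ctx -> ty -> Type :=
| tvar  : forall G A, var G A -> tm G A
| tlam  : forall G A B, tm (A :: G) B -> tm G (TArr A B)
| tapp  : forall G A B, tm G (TArr A B) -> tm G A -> tm G B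
| tpair : forall G A B, tm G A -> tm G B -> tm G (TProd A B)
| tfst  : forall G A B, tm G (TProd A B) -> tm G A
| tsnd  : forall G A B, tm G (TProd A B) -> tm G B
| tunit : forall G, tm G TUnit
| tinl  : forall G A B, tm G A -> tm G (TSum A B)
| tinr  : forall G A B, tm G B -> tm G (TSum A B)
| tmatch : forall G A B C, tm G (TSum A B) -> tm (A :: G) C -> tm (B :: G) C -> tm G C
| tabsurd : forall G C, tm G TEmpty -> tm G C.

Fixpoint sem (rho : nat -> Type) (A : ty) : Type :=
  match A with
  | TAtom n => rho n
  | TArr A B => sem rho A -> sem rho B
  | TProd A B => (sem rho A * sem rho B)%type
  | TUnit => unit
  | TSum A B => (sem rho A + sem rho B)%type
  | TEmpty => Empty_set
  end.

Fixpoint env (rho : nat -> Type) (G : ctx) : Type :=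
  match G with
  | [] => unit
  | A :: G' => (sem rho A * env rho G')%type
  end.

Fixpoint lookup {rho : nat -> Type} {G A} (x : var G A) : env rho G -> sem rho A :=
  match x in var G A return env rho G -> sem rho A with
  | vz _ _ => fun e => fst e
  | vs _ _ _ y => fun e => lookup y (snd e)
  end.

Fixpoint eval {rho : nat -> Type} {G A} (t : tm G A) : env rho G -> sem rho A :=
  match t in tm G A return env rho G -> sem rho A with
  | tvar _ _ x => fun e => lookup x e
  | tlam _ _ _ b => fun e => fun a => eval b (a, e)
  | tapp _ _ _ f u => fun e => (eval f e) (eval u e)
  | tpair _ _ _ u w => fun e => (eval u e, eval w e)
  | tfst _ _ _ u => fun e => fst (eval u e)
  | tsnd _ _ _ u => fun e => snd (eval u e)
  | tunit _ => fun _ => tt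
  | tinl _ _ _ u => fun e => inl (eval u e)
  | tinr _ _ _ u => fun e => inr (eval u e)
  | tmatch _ _ _ _ s u1 u2 => fun e =>
      match eval s e with
      | inl a => eval u1 (a, e)
      | inr b => eval u2 (b, e)
      end
  | tabsurd _ _ s => fun e => match eval s e with end
  end.

Definition denote {rho : nat -> Type} {A} (t : tm [] A) : sem rho A := eval t tt.

(* Main.v *)
Require Import Defs.
From Stdlib Require Import List.
Import ListNotations.
From Stdlib Require Import Classical ClassicalDescription FunctionalExtensionality ClassicalEpsilon.

Section S.
Variable rho : nat -> Type.

Lemma choice_T {X Y : Type} (P : X -> Y -> Prop) :
  (forall x, exists y, P x y) -> exists h : X -> Y, forall x, P x (h x).
Proof.
  intro H. exists (fun x => proj1_sig (constructive_indefinite_description _ (H x))).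
  intro x. exact (proj2_sig (constructive_indefinite_description _ (H x))).
Qed.

Definition Reify (A : ty) := forall G (v : sem rho A), exists t : tm G A,
  forall e, eval (rho:=rho) t e = v.
Definition Fin (A : ty) := exists l : list (sem rho A), forall v, In v l.
Definition CaseP (A : ty) := forall G C (f : sem rho A -> tm G C),
  exists t : tm G (TArr A C), forall e a, eval (rho:=rho) t e a = eval (f a) e.

Definition Kc G C D : tm G (TArr C (TArr D C)) :=
  tlam _ _ _ (tlam _ _ _ (tvar _ _ (vs _ _ _ (vz _ _)))).

Fixpoint recon {X Y : Type} (l : list X) (bs : list Y) (d : X -> Y) (x : X) : Y :=
  match l, bs with
  | a :: l', b :: bs' => if excluded_middle_informative (x = a) then b else recon l' bs' d x
  | _, _ => d x
  end.

Lemma recon_ok {X Y : Type} (l : list X) (g d : X -> Y) x :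
  In x l -> recon l (map g l) d x = g x.
Proof.
  induction l as [|a l IH]; simpl; [tauto|].
  intros Hx. destruct (excluded_middle_informative (x = a)) as [->|Hn]; auto.
  destruct Hx as [->|Hx]; [congruence|auto].
Qed.

Lemma fun_fin {X Y : Type} (l1 : list X) (l2 : list Y) :
  (forall x, In x l1) -> (forall y, In y l2) -> exists l : list (X -> Y), forall g, In g l.
Proof.
  intros H1 H2.
  destruct (classic (inhabited (X -> Y))) as [[g0]|Hno].
  2:{ exists []. intro g. exfalso. apply Hno. constructor. exact g. }
  set (upd := fun (h : X -> Y) a y x => if excluded_middle_informative (x = a) then y else h x).
  set (F := fix F (l : list X) : list (X -> Y) := match l with
    | [] => [g0]
    | a :: l => flat_map (fun h => map (fun y => upd h a y) l2) (F l) end).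
  assert (HF : forall l g, exists h, In h (F l) /\ forall x, In x l -> h x = g x).
  { induction l as [|a l IH]; intro g.
    - exists g0. simpl. split; [auto| tauto].
    - destruct (IH g) as [h [Hh He]]. exists (upd h a (g a)). split.
      + simpl. apply in_flat_map. exists h. split; auto. apply in_map. auto.
      + intros x Hx. unfold upd. destruct (excluded_middle_informative (x = a)) as [->|Hn]; auto.
        destruct Hx as [->|Hx]; [congruence|auto]. }
  exists (F l1). intro g. destruct (HF l1 g) as [h [Hh He]].
  replace g with h; auto. apply functional_extensionality. auto.
Qed.

Lemma list_lemma A1 A2 (RA1 : Reify A1) (CA2 : CaseP A2) :
  forall (l : list (sem rho A1)) G C (f : list (sem rho A2) -> tm G C),
  exists T : tm G (TArr (TArr A1 A2) C), forall e g,
    eval (rho:=rho) T e g = eval (f (map g l)) e.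
Proof.
  induction l as [|a l IH]; intros G C f.
  - exists (tapp _ _ _ (Kc G C (TArr A1 A2)) (f [])). intros e g. reflexivity.
  - destruct (choice_T (fun b (T : tm G (TArr (TArr A1 A2) C)) => forall e g,
       eval (rho:=rho) T e g = eval (f (b :: map g l)) e)
       (fun b => IH G C (fun bs => f (b :: bs)))) as [h Hh].
    destruct (CA2 G _ h) as [U HU].
    destruct (RA1 G a) as [r Hr].
    set (COMB := tlam _ _ _ (tlam _ _ _ (tlam _ _ _
      (tapp _ _ _ (tapp _ _ _ (tvar _ _ (vs _ _ _ (vz _ _)))
                     (tapp _ _ _ (tvar _ _ (vz _ _)) (tvar _ _ (vs _ _ _ (vs _ _ _ (vz _ _))))))
                (tvar _ _ (vz _ _))))) : tm G (TArr A1 (TArr (TArr A2 (TArr (TArr A1 A2) C)) (TArr (TArr A1 A2) C)))).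
    exists (tapp _ _ _ (tapp _ _ _ COMB r) U).
    intros e g. simpl. rewrite HU, Hh, Hr. reflexivity.
Qed.

Definition PP A := Reify A /\ Fin A /\ CaseP A.

Lemma all_closed A : closed_ty A = true -> PP A.
Proof.
  induction A as [n|A1 IH1 A2 IH2|A1 IH1 A2 IH2| |A1 IH1 A2 IH2|]; simpl; intro H;
    try discriminate;
    try (apply andb_prop in H; destruct H as [H1 H2];
         destruct (IH1 H1) as [R1 [[l1 F1] C1]]; destruct (IH2 H2) as [R2 [[l2 F2] C2]]).
  -
    assert (CA : CaseP (TArr A1 A2)).
    { intros G C f.
      destruct (classic (inhabited (sem rho A1 -> sem rho A2))) as [[g0]|Hno].
      - destruct (list_lemma A1 A2 R1 C2 l1 G C (fun bs => f (recon l1 bs g0))) as [T HT].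
        exists T. intros e g. rewrite HT. f_equal. f_equal.
        apply functional_extensionality. intro x. apply recon_ok. auto.
      - destruct l1 as [|a1 l1'].
        + exfalso. apply Hno. constructor. intro x. exact (False_rect _ (F1 x)).
        + destruct (R1 (TArr A1 A2 :: G) a1) as [r _].
          destruct (C2 (TArr A1 A2 :: G) C
             (fun b => False_rect _ (Hno (inhabits (fun _ => b))))) as [u _].
          exists (tlam _ _ _ (tapp _ _ _ u (tapp _ _ _ (tvar _ _ (vz _ _)) r))).
          intros e g. exfalso. apply Hno. constructor. exact g. }
    split; [|split].
    + intros G v.
      destruct (choice_T (fun a (t : tm G A2) => forall e, eval (rho:=rho) t e = v a)
                 (fun a => R2 G (v a))) as [h Hh].
      destruct (C1 G A2 h) as [t Ht]. exists t. intro e.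
      apply functional_extensionality. intro a. rewrite Ht. apply Hh.
    + exact (fun_fin l1 l2 F1 F2).
    + exact CA.
  -
    split; [|split].
    + intros G [a b]. destruct (R1 G a) as [t1 H1']. destruct (R2 G b) as [t2 H2'].
      exists (tpair _ _ _ t1 t2). intro e. simpl. rewrite H1', H2'. reflexivity.
    + exists (list_prod l1 l2). intros [a b]. apply in_prod; auto.
    + intros G C f.
      destruct (choice_T (fun a (t : tm G (TArr A2 C)) => forall e b,
          eval (rho:=rho) t e b = eval (f (a, b)) e)
          (fun a => C2 G C (fun b => f (a, b)))) as [h Hh].
      destruct (C1 G _ h) as [t1 Ht1].
      set (UNC := tlam _ _ _ (tlam _ _ _ (tapp _ _ _
         (tapp _ _ _ (tvar _ _ (vs _ _ _ (vz _ _))) (tfst _ _ _ (tvar _ _ (vz _ _))))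
         (tsnd _ _ _ (tvar _ _ (vz _ _))))) : tm G (TArr (TArr A1 (TArr A2 C)) (TArr (TProd A1 A2) C))).
      exists (tapp _ _ _ UNC t1). intros e [a b]. simpl. rewrite Ht1, Hh. reflexivity.
  -
    split; [|split].
    + intros G []. exists (tunit G). intro e. reflexivity.
    + exists [tt]. intros []. simpl. auto.
    + intros G C f. exists (tapp _ _ _ (Kc G C TUnit) (f tt)). intros e []. reflexivity.
  -
    split; [|split].
    + intros G [a|b].
      * destruct (R1 G a) as [t Ht]. exists (tinl _ _ _ t). intro e. simpl. rewrite Ht. reflexivity.
      * destruct (R2 G b) as [t Ht]. exists (tinr _ _ _ t). intro e. simpl. rewrite Ht. reflexivity.
    + exists (map inl l1 ++ map inr l2). intros [a|b]; apply in_app_iff; [left|right]; apply in_map; auto.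
    + intros G C f.
      destruct (C1 G C (fun a => f (inl a))) as [t1 Ht1].
      destruct (C2 G C (fun b => f (inr b))) as [t2 Ht2].
      set (CASE := tlam _ _ _ (tlam _ _ _ (tlam _ _ _
         (tmatch _ _ _ _ (tvar _ _ (vz _ _))
            (tapp _ _ _ (tvar _ _ (vs _ _ _ (vs _ _ _ (vs _ _ _ (vz _ _))))) (tvar _ _ (vz _ _)))
            (tapp _ _ _ (tvar _ _ (vs _ _ _ (vs _ _ _ (vz _ _)))) (tvar _ _ (vz _ _))))))
         : tm G (TArr (TArr A1 C) (TArr (TArr A2 C) (TArr (TSum A1 A2) C)))).
      exists (tapp _ _ _ (tapp _ _ _ CASE t1) t2). intros e [a|b]; simpl; auto.
  -
    split; [|split].
    + intros G [].
    + exists []. intros [].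
    + intros G C f. exists (tlam _ _ _ (tabsurd _ _ (tvar _ _ (vz _ _)))). intros e [].
Qed.

End S.

Theorem mainTheorem7 :
  forall (A : ty), closed_ty A = true ->
  forall (rho : nat -> Type) (v : sem rho A),
  exists t : tm [] A, denote (rho := rho) t = v.
Proof.
  intros A HA rho v.
  destruct (all_closed rho A HA) as [R _].
  destruct (R [] v) as [t Ht]. exists t. apply Ht.
Qed.
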